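(* Let $\mathcal{S}$ be an $F$-weighted boundary stratum and $U\subset A_\mathcal{S}$ a subtorus. Then $$\dim T_\mathcal{S}-\dim(U\cap T_\mathcal{S})=\dim_{\mathbb{Q}}\mathrm{ev}(\mathrm{Ann}(U)).$$ In particular, $\dim T_\mathcal{S}=\dim_{\mathbb{Q}}\mathrm{ev}(N(\mathcal{S}))$.
   Context: $F$ is a totally real number field of degree $g$ with trace pairing $\langle x,y\rangle=\mathrm{Tr}_{F/\mathbb{Q}}(xy)$. For a lattice $\mathcal{I}\subset F$, $\mathcal{I}^\vee=\{x:\langle x,y\rangle\in\mathbb{Z}\ \forall y\in\mathcal{I}\}$. An $\mathcal{I}$-weighted stable curve is a stable curve of arithmetic genus $g$ and geometric genus $0$ with an element of $\mathcal{I}$ attached to each branch at each node, such that branches at a node have opposite weights, weights on each component sum to zero, and the weights span $\mathcal{I}$. An $F$-weighted boundary stratum $\mathcal{S}$ is the moduli space of such weighted curves topologically equivalent (weight-preservingly) to a fixed one. $\mathrm{Sym}_{\mathbb{Q}}(F)\subset F\otimes_{\mathbb{Q}}F$ is the symmetric tensors, $\mathbf{S}_{\mathbb{Q}}(F)$ the quotient of $F\otimes_{\mathbb{Q}}F$ by the span of $x\otimes y-y\otimes x$ (and $\mathbf{S}_{\mathbb{Z}}(\mathcal{I}^\vee)$ similarly), dual via $\langle a\otimes b,c\otimes d\rangle=\langle a,c\rangle\langle b,d\rangle$. $N(\mathcal{S})\subset\mathbf{S}_{\mathbb{Q}}(F)$ is the annihilator of the span of $r\otimes r$ over the weights $r$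 of $\mathcal{S}$. $\Lambda^1=\{x\in F\otimes_{\mathbb{Q}}F:\lambda x=x\lambda\ \forall\lambda\in F\}\subset\mathrm{Sym}_{\mathbb{Q}}(F)$, with annihilator $\mathrm{Ann}(\Lambda^1)\subset\mathbf{S}_{\mathbb{Q}}(F)$. The ambient torus is $A_\mathcal{S}=\mathrm{Hom}_{\mathbb{Z}}(N(\mathcal{S})\cap\mathbf{S}_{\mathbb{Z}}(\mathcal{I}^\vee),\mathbb{G}_m)$, so its rational character space is $\chi(A_\mathcal{S})\otimes\mathbb{Q}=N(\mathcal{S})$; for a subtorus $U$, $\mathrm{Ann}(U)\subset N(\mathcal{S})$ is the subspace of rational characters trivial on $U$. The RM-torus $T_\mathcal{S}$ is the kernel of the restriction map $A_\mathcal{S}\to\mathrm{Hom}(N(\mathcal{S})\cap\mathrm{Ann}(\Lambda^1)\cap\mathbf{S}_{\mathbb{Z}}(\mathcal{I}^\vee),\mathbb{G}_m)$, so $\mathrm{Ann}(T_\mathcal{S})=N(\mathcal{S})\cap\mathrm{Ann}(\Lambda^1)$. The evaluation map is $\mathrm{ev}\colon\mathbf{S}_{\mathbb{Q}}(F)\to F$, $\mathrm{ev}(s\otimes t)=st$. *)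

(* Defs.v *)
From HB Require Import structures.
From mathcomp Require Import all_boot all_order all_algebra all_field.
Set Implicit Arguments. Unset Strict Implicit. Unset Printing Implicit Defensive.
Import Order.TTheory GRing.Theory Num.Theory.
Local Open Scope ring_scope.

Section RMDefs.
Variable F : fieldExtType rat.

Definition deg : nat := \dim {:F}.

Definition totally_real : Prop :=
  forall (f : {rmorphism F -> algC}) (x : F), f x \is Num.real.

(* a fixed Q-basis of F, used to identify F (x)_Q F with deg x deg matrices *)
Definition eb (i : 'I_deg) : F := tnth (vbasis {:F}) i.
Definition crd (i : 'I_deg) (x : F) : rat := coord (vbasis {:F}) i x.

(* trace Tr_{F/Q}: trace of multiplication by x *)
Definition trF (x : F) : rat := \sum_i crd i (x * eb i).
Definition tp (x y : F) : rat := trF (x * y).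

(* F (x)_Q F, realised as matrices of coordinates in the basis eb *)
Notation TT := 'M[rat]_(deg, deg).
Definition tens (a b : F) : TT := \matrix_(i, j) (crd i a * crd j b).

(* pairing <a(x)b, c(x)d> = <a,c><b,d> *)
Definition pairT (x y : TT) : rat :=
  \sum_i \sum_j \sum_k \sum_l x i j * y k l * (tp (eb i) (eb k) * tp (eb j) (eb l)).

Definition evT (x : TT) : F := \sum_i \sum_j x i j *: (eb i * eb j).
Definition evL : 'Hom(TT, F) := linfun evT.

Definition lmulT (l : F) (x : TT) : TT := \sum_i \sum_j x i j *: tens (l * eb i) (eb j).
Definition rmulT (l : F) (x : TT) : TT := \sum_i \sum_j x i j *: tens (eb i) (l * eb j).

Definition inLam1 (x : TT) : Prop := forall l : F, lmulT l x = rmulT l x.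

(* Preimage in F(x)F of Ann(Lambda^1) in S_Q(F) *)
Definition inAnnLam1 (m : TT) : Prop := forall x, inLam1 x -> pairT x m = 0.

Definition is_lattice_basis (b : deg.-tuple F) : Prop := basis_of {:F} b.
Definition inLat (b : deg.-tuple F) (x : F) : Prop :=
  exists c : 'I_deg -> int, x = \sum_i (c i)%:~R *: tnth b i.

(* Dual graph of a stable curve of geometric genus 0 with weights on branches:
   V = components (all rational), H = branches at nodes (half-edges),
   vert h = component containing branch h, opp h = other branch of the same node,
   w h = weight on branch h. *)
Record wgraph := WGraph {
  wV : finType;
  wH : finType;
  wvert : wH -> wV;
  wopp : wH -> wH;
  ww : wH -> F }.

Definition adj (G : wgraph) : rel (wV G) :=
  fun u v => [exists h, (wvert h == u) && (wvert (wopp h) == v)].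

(* G is an I-weighted stable curve of arithmetic genus g = deg, geometric genus 0,
   where I is the lattice with Z-basis b *)
Definition is_weighted_stable (b : deg.-tuple F) (G : wgraph) : Prop :=
  [/\
      (forall h : wH G, wopp (wopp h) = h) /\ (forall h : wH G, wopp h != h),
      (0 < #|wV G|)%N /\ (forall u v : wV G, connect (@adj G) u v),
      (* arithmetic genus = first Betti number of dual graph = g *)
      (#|wH G| %/ 2 + 1 = #|wV G| + deg)%N /\ ~~ odd #|wH G|,
      (* stability: each rational component has >= 3 special points *)
      (forall v : wV G, 3 <= #|[set h | wvert h == v]|)%N &
      [/\ forall h : wH G, inLat b (ww h),
          forall h : wH G, ww (wopp h) = - ww h,
          forall v : wV G, \sum_(h : wH G | wvert h == v) ww h = 0 &
          forall x, inLat b x ->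
            exists c : wH G -> int, x = \sum_h (c h)%:~R *: ww h]].

(* Preimage in F(x)F of N(S) in S_Q(F): annihilator of the r(x)r *)
Definition inNpre (G : wgraph) (m : TT) : Prop :=
  forall h : wH G, pairT (tens (ww h) (ww h)) m = 0.

(* Tori are encoded through their rational character spaces.  A subspace
   W of F(x)F containing the antisymmetric tensors and contained in the
   preimage Npre of N(S) represents the subspace W/A of N(S) = chi(A_S)(x)Q;
   the subtorus with annihilator W/A has dimension dim N(S) - dim (W/A)
   = dim Npre - dim W. *)
Definition subtorus_dim (Npre W : {vspace TT}) : int := (\dim Npre)%:Z - (\dim W)%:Z.

(* The annihilator of an intersection of subtori is the sum of annihilators. *)
Definition ann_cap (W1 W2 : {vspace TT}) : {vspace TT} := (W1 + W2)%VS.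

(* Ann(T_S) = N(S) cap Ann(Lambda^1) *)
Definition annT (Npre AnnL : {vspace TT}) : {vspace TT} := (Npre :&: AnnL)%VS.

End RMDefs.

(* Main.v *)
Require Import Defs.
From HB Require Import structures.
From mathcomp Require Import all_boot all_order all_algebra all_field.
From mathcomp Require Import ring.
Import Order.TTheory GRing.Theory Num.Theory.
Local Open Scope ring_scope.
Set Implicit Arguments. Unset Strict Implicit. Unset Printing Implicit Defensive.

Section S.
Variable F : fieldExtType rat.
Local Notation d := (deg F).
Local Notation TT := 'M[rat]_(d, d).
Local Notation eb := (@eb F).
Local Notation crd := (@crd F).
Local Notation trF := (@trF F).
Local Notation tp := (@tp F).
Local Notation pairT := (@pairT F).
Local Notation evT := (@Defs.evT F).
Local Notation inLam1 := (@inLam1 F).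
Local Notation inAnnLam1 := (@inAnnLam1 F).

Lemma evT_is_linear : linear evT.
Proof.
move=> c x y; rewrite /evT scaler_sumr -big_split /=; apply: eq_bigr => i _.
rewrite scaler_sumr -big_split /=; apply: eq_bigr => j _.
by rewrite !mxE scalerDl scalerA.
Qed.
HB.instance Definition _ := GRing.isLinear.Build rat TT F _ evT evT_is_linear.

Lemma evLE m : evL F m = evT m.
Proof. by rewrite lfunE. Qed.

Lemma crd_eb i j : crd j (eb i) = (i == j)%:R.
Proof.
rewrite /crd /Defs.eb (tnth_nth 0) coord_free //.
exact: basis_free (vbasisP _).
Qed.

Lemma crd_expand x : x = \sum_i crd i x *: eb i.
Proof.
rewrite {1}(coord_vbasis (memvf x)); apply: eq_bigr => i _.
by rewrite /Defs.eb (tnth_nth 0).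
Qed.

Lemma crdD i a b : crd i (a + b) = crd i a + crd i b.
Proof. exact: linearD. Qed.
Lemma crdZ i c a : crd i (c *: a) = c * crd i a.
Proof. exact: linearZ. Qed.

Lemma trF_lin c u v : trF (c *: u + v) = c * trF u + trF v.
Proof.
rewrite /trF mulr_sumr -big_split /=; apply: eq_bigr => i _.
by rewrite mulrDl -scalerAl crdD crdZ.
Qed.

Lemma tp_sym a b : tp a b = tp b a.
Proof. by rewrite /tp mulrC. Qed.

Lemma tp_linl c u v w : tp (c *: u + v) w = c * tp u w + tp v w.
Proof. by rewrite /tp mulrDl -scalerAl trF_lin. Qed.

Lemma tp_linr c u v w : tp w (c *: u + v) = c * tp w u + tp w v.
Proof. by rewrite !(tp_sym w) tp_linl. Qed.

Lemma tp_mul l a b : tp (l * a) b = tp a (l * b).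
Proof. by rewrite /tp mulrCA mulrA. Qed.

Lemma trF1 : trF 1 = d%:R.
Proof.
rewrite /trF (eq_bigr (fun _ => 1)) ?sumr_const ?card_ord // => i _.
by rewrite mul1r crd_eb eqxx.
Qed.

Lemma d_neq0 : (d%:R : rat) != 0.
Proof.
rewrite pnatr_eq0 -lt0n /deg lt0n dimv_eq0; apply/eqP => h.
have : (1 : F) \in {:F}%VS by rewrite memvf.
by rewrite h memv0 oner_eq0.
Qed.

Lemma lin_expand (f : F -> rat) :
  (forall c u v, f (c *: u + v) = c * f u + f v) ->
  forall a, f a = \sum_k crd k a * f (eb k).
Proof.
move=> fl a.
have f0 : f 0 = 0.
  by have := fl 1 0 0; rewrite scale1r addr0 mul1r => /esym/(canRL (addrK _)); rewrite subrr.
rewrite {1}(crd_expand a).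
elim/big_rec2: _ => [//|k y s _ <-].
by rewrite fl.
Qed.


Definition psi (y : TT) (a b : F) : rat :=
  \sum_i \sum_j y i j * (tp (eb i) a * tp (eb j) b).

Lemma psi_liny c y z a b : psi (c *: y + z) a b = c * psi y a b + psi z a b.
Proof.
rewrite /psi mulr_sumr -big_split /=; apply: eq_bigr => i _.
rewrite mulr_sumr -big_split /=; apply: eq_bigr => j _.
by rewrite !mxE; ring.
Qed.

Lemma psi0 a b : psi 0 a b = 0.
Proof. by rewrite /psi big1 // => i _; rewrite big1 // => j _; rewrite mxE mul0r. Qed.

Lemma psi_sum2 (X : 'I_d -> 'I_d -> rat) (Y : 'I_d -> 'I_d -> TT) a b :
  psi (\sum_i \sum_j X i j *: Y i j) a b = \sum_i \sum_j X i j * psi (Y i j) a b.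
Proof.
have psiD y z : psi (y + z) a b = psi y a b + psi z a b.
  by have := psi_liny 1 y z a b; rewrite scale1r mul1r.
rewrite (big_morph (fun y => psi y a b) psiD (psi0 a b)); apply: eq_bigr => i _.
rewrite (big_morph (fun y => psi y a b) psiD (psi0 a b)); apply: eq_bigr => j _.
by rewrite -[_ *: _]addr0 psi_liny psi0 addr0.
Qed.

Lemma tp_expandl u a : tp u a = \sum_k crd k u * tp (eb k) a.
Proof. by apply: (lin_expand (f := fun u => tp u a)) => c x y; rewrite tp_linl. Qed.

Lemma psi_tens u v a b : psi (tens u v) a b = tp u a * tp v b.
Proof.
rewrite (tp_expandl u) (tp_expandl v) big_distrl /=; apply: eq_bigr => i _.
rewrite big_distrr /=; apply: eq_bigr => j _.
by rewrite mxE mulrACA.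
Qed.

Lemma psi_l l x a b : psi (lmulT l x) a b = psi x (l * a) b.
Proof.
rewrite psi_sum2; apply: eq_bigr => i _; apply: eq_bigr => j _.
by rewrite psi_tens tp_mul.
Qed.

Lemma psi_r l x a b : psi (rmulT l x) a b = psi x a (l * b).
Proof.
rewrite psi_sum2; apply: eq_bigr => i _; apply: eq_bigr => j _.
by rewrite psi_tens tp_mul.
Qed.

Lemma psi_lina x c u v b : psi x (c *: u + v) b = c * psi x u b + psi x v b.
Proof.
rewrite /psi mulr_sumr -big_split /=; apply: eq_bigr => i _.
rewrite mulr_sumr -big_split /=; apply: eq_bigr => j _.
by rewrite tp_linr; ring.
Qed.

Lemma psi_linb x c u v a : psi x a (c *: u + v) = c * psi x a u + psi x a v.
Proof.
rewrite /psi mulr_sumr -big_split /=; apply: eq_bigr => i _.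
rewrite mulr_sumr -big_split /=; apply: eq_bigr => j _.
by rewrite tp_linr; ring.
Qed.

Lemma pairT_psi x m : pairT x m = \sum_k \sum_l m k l * psi x (eb k) (eb l).
Proof.
rewrite /pairT /psi.
transitivity (\sum_i \sum_j \sum_k \sum_l m k l * (x i j * (tp (eb i) (eb k) * tp (eb j) (eb l)))).
  apply: eq_bigr => i _; apply: eq_bigr => j _; apply: eq_bigr => k _; apply: eq_bigr => l _.
  by ring.
under eq_bigr do rewrite exchange_big /=.
under eq_bigr do under eq_bigr do rewrite exchange_big /=.
rewrite exchange_big /=; apply: eq_bigr => k _.
rewrite exchange_big /=; apply: eq_bigr => l _.
rewrite mulr_sumr; apply: eq_bigr => i _; rewrite mulr_sumr //.
Qed.


Lemma lin_sum2 (g : F -> rat) :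
  (forall c u v, g (c *: u + v) = c * g u + g v) ->
  forall (c : 'I_d -> 'I_d -> rat) (w : 'I_d -> 'I_d -> F),
  g (\sum_i \sum_j c i j *: w i j) = \sum_i \sum_j c i j * g (w i j).
Proof.
move=> gl c w.
have g0 : g 0 = 0.
  by have := gl 1 0 0; rewrite scale1r addr0 mul1r => /esym/(canRL (addrK _)); rewrite subrr.
have gD u v : g (u + v) = g u + g v by have := gl 1 u v; rewrite scale1r mul1r.
rewrite (big_morph g gD g0); apply: eq_bigr => i _.
rewrite (big_morph g gD g0); apply: eq_bigr => j _.
by rewrite -[_ *: _]addr0 gl g0 addr0.
Qed.

Lemma lin_sum1 (g : F -> rat) :
  (forall c u v, g (c *: u + v) = c * g u + g v) ->
  forall (c : 'I_d -> rat) (w : 'I_d -> F),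
  g (\sum_i c i *: w i) = \sum_i c i * g (w i).
Proof.
move=> gl c w.
have g0 : g 0 = 0.
  by have := gl 1 0 0; rewrite scale1r addr0 mul1r => /esym/(canRL (addrK _)); rewrite subrr.
have gD u v : g (u + v) = g u + g v by have := gl 1 u v; rewrite scale1r mul1r.
rewrite (big_morph g gD g0); apply: eq_bigr => i _.
by rewrite -[_ *: _]addr0 gl g0 addr0.
Qed.

Lemma lam1_pair x m : inLam1 x -> evT m = 0 -> pairT x m = 0.
Proof.
move=> xL m0.
have h k l : psi x (eb k) (eb l) = psi x 1 (eb k * eb l).
  by rewrite -{1}[eb k]mulr1 -psi_l xL psi_r.
rewrite pairT_psi.
under eq_bigr do under eq_bigr do rewrite h.
rewrite -(lin_sum2 (g := psi x 1)); last by move=> c u v; rewrite psi_linb.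
have -> : \sum_i \sum_j m i j *: (eb i * eb j) = evT m by [].
rewrite m0.
by have := psi_linb x 1 0 0 1; rewrite scale1r addr0 mul1r => /esym/(canRL (addrK _)); rewrite subrr.
Qed.

Definition Pm : 'M[rat]_d := \matrix_(i, k) tp (eb i) (eb k).

Lemma tp_nondeg u : (forall a, tp u a = 0) -> u = 0.
Proof.
move=> h; apply/eqP; apply: contraT => hu.
have := h u^-1; rewrite /tp mulfV // trF1 => /eqP; by rewrite (negPf d_neq0).
Qed.

Lemma Pm_unit : Pm \in unitmx.
Proof.
rewrite -row_free_unit; apply: inj_row_free => v vP.
set u := \sum_i v 0 i *: eb i.
have hk k : tp u (eb k) = 0.
  have := congr1 (fun M : 'M[rat]_(1, d) => M 0 k) vP; rewrite !mxE => <-.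
  rewrite (lin_sum1 (g := fun u => tp u (eb k))); last by move=> c a b; rewrite tp_linl.
  by apply: eq_bigr => i _; rewrite mxE.
have u0 : u = 0.
  apply: tp_nondeg => a.
  rewrite (lin_expand (f := tp u)); last by move=> c a1 b1; rewrite tp_linr.
  by rewrite big1 // => k _; rewrite hk mulr0.
apply/rowP => i; rewrite mxE.
have := congr1 (crd i) u0; rewrite /u (lin_sum1 (g := crd i)); last first.
  by move=> c a b; rewrite crdD crdZ.
rewrite {2}/Defs.crd linear0 => <-.
rewrite (bigD1 i) //= crd_eb eqxx mulr1 big1 ?addr0 // => j /negPf ji.
by rewrite crd_eb ji mulr0.
Qed.

Definition Kmat (y : TT) : TT := \matrix_(k, l) psi y (eb k) (eb l).

Lemma Kmat_mx y : Kmat y = Pm^T *m y *m Pm.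
Proof.
apply/matrixP => k l; rewrite !mxE /psi.
rewrite exchange_big /=; apply: eq_bigr => j _.
rewrite mxE big_distrl /=; apply: eq_bigr => i _.
by rewrite !mxE; ring.
Qed.

Lemma Kmat_inj y z : Kmat y = Kmat z -> y = z.
Proof.
rewrite !Kmat_mx => h.
have PTu : Pm^T \in unitmx by rewrite unitmx_tr Pm_unit.
have e w : w = invmx Pm^T *m (Pm^T *m w *m Pm) *m invmx Pm.
  by rewrite !mulmxA mulVmx // mul1mx -mulmxA mulmxV ?Pm_unit // mulmx1.
by rewrite (e y) h -e.
Qed.

Lemma ann_ev m : (forall x, inLam1 x -> pairT x m = 0) -> evT m = 0.
Proof.
move=> H; case: (eqVneq (evT m) 0) => // hne; exfalso.
set z := (evT m)^-1.
pose Q : TT := \matrix_(k, l) tp z (eb k * eb l).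
pose x := invmx Pm^T *m Q *m invmx Pm.
have PTu : Pm^T \in unitmx by rewrite unitmx_tr Pm_unit.
have Kx : Kmat x = Q.
  by rewrite Kmat_mx /x !mulmxA mulmxV // mul1mx -mulmxA mulVmx ?Pm_unit // mulmx1.
have psix a b : psi x a b = tp z (a * b).
  rewrite (lin_expand (f := fun a => psi x a b)); last by move=> c u v; rewrite psi_lina.
  rewrite [RHS](lin_expand (f := fun a => tp z (a * b))); last first.
    by move=> c u v; rewrite mulrDl -scalerAl tp_linr.
  apply: eq_bigr => k _; congr (_ * _).
  rewrite (lin_expand (f := fun b => psi x (eb k) b)); last by move=> c u v; rewrite psi_linb.
  rewrite [RHS](lin_expand (f := fun b => tp z (eb k * b))); last first.
    by move=> c u v; rewrite mulrDr -scalerAr tp_linr.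
  apply: eq_bigr => l _; congr (_ * _).
  by have := congr1 (fun M : TT => M k l) Kx; rewrite !mxE.
have xL : inLam1 x.
  move=> l; apply: Kmat_inj; apply/matrixP => k j; rewrite !mxE psi_l psi_r !psix.
  by rewrite mulrA [l * _]mulrC -mulrA mulrA.
have := H x xL; rewrite pairT_psi.
under eq_bigr do under eq_bigr do rewrite psix.
rewrite -(lin_sum2 (g := tp z)); last by move=> c u v; rewrite tp_linr.
have -> : \sum_i \sum_j m i j *: (eb i * eb j) = evT m by [].
by rewrite /tp /z mulVf // trF1 => /eqP; rewrite (negPf d_neq0).
Qed.

Lemma annL_ev m : inAnnLam1 m <-> evT m = 0.
Proof.
split; first exact: ann_ev.
by move=> m0 x xL; apply: lam1_pair.
Qed.

End S.

From mathcomp Require Import zify.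

Theorem proposition3p7 (F : fieldExtType rat) (b : (deg F).-tuple F)
  (G : wgraph F)
  (Npre AnnL : {vspace 'M[rat]_(deg F, deg F)}) :
  totally_real F ->
  is_lattice_basis b ->
  is_weighted_stable b G ->
  (forall m, m \in Npre <-> inNpre G m) ->
  (forall m, m \in AnnL <-> inAnnLam1 m) ->
  (forall W : {vspace 'M[rat]_(deg F, deg F)},
     (forall x y : F, tens x y - tens y x \in W) ->
     (W <= Npre)%VS ->
     subtorus_dim Npre (annT Npre AnnL)
       - subtorus_dim Npre (ann_cap W (annT Npre AnnL))
     = (\dim (evL F @: W))%:Z)
  /\ subtorus_dim Npre (annT Npre AnnL) = (\dim (evL F @: Npre))%:Z.
Proof.
move=> _ _ _ _ hA.
have AK : AnnL = lker (evL F).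
  apply/vspaceP => m; rewrite memv_ker evLE.
  apply/idP/eqP => [/hA/annL_ev // | /annL_ev/hA //].
rewrite /subtorus_dim /annT AK; split.
  move=> W _ sWN; rewrite /ann_cap.
  have h1 := dimv_sum_cap W (Npre :&: lker (evL F)).
  have h2 : (W :&: (Npre :&: lker (evL F)) = W :&: lker (evL F))%VS.
    by rewrite capvA (capv_idPl sWN).
  have h3 := limg_ker_dim (evL F) W.
  rewrite h2 in h1.
  move: h1 h3; move: (\dim Npre) (\dim (W + _)) (\dim (W :&: _)) (\dim W) (\dim (Npre :&: _)) (\dim (evL F @: W)).
  move=> a1 a2 a3 a4 a5 a6 e1 e2.
  lia.
have := limg_ker_dim (evL F) Npre.
move: (\dim Npre) (\dim (Npre :&: _)) (\dim (evL F @: Npre)) => a1 a2 a3 e.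
lia.
Qed.
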